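(* Let $D\ge2$ and $2\le m\le D$ be integers. Let $P\in\mathbb{C}[x]$ have the form $P(x)=ax^D+bx^{D-m}+(\text{terms of degree}<D-m)$ with $ab\neq0$ (so the coefficients of $x^{D-1},\dots,x^{D-m+1}$ vanish). Then for every positive integer $n$, the iterate $P^n$ has the form $\alpha x^{D^n}+\beta x^{D^n-m}+(\text{terms of degree}<D^n-m)$ with $\alpha\beta\neq0$.
   Context: $P^n$ denotes the $n$-th compositional iterate of $P$. *)

(* Defs.v *)
From HB Require Import structures.
From mathcomp Require Import all_boot all_order all_algebra.
From mathcomp Require Import reals.
From mathcomp Require Export complex.
Set Implicit Arguments. Unset Strict Implicit. Unset Printing Implicit Defensive.
Import Order.TTheory GRing.Theory Num.Theory.
Local Open Scope ring_scope.

Definition poly_iter (K : nzRingType) (P : {poly K}) (n : nat) : {poly K} :=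
  iter n (fun q => P \Po q) 'X.

(* Main.v *)
Require Import Defs.
From HB Require Import structures.
From mathcomp Require Import all_boot all_order all_algebra.
From mathcomp Require Import reals complex.
From mathcomp Require Import ring zify.
Import Order.TTheory GRing.Theory Num.Theory.
Local Open Scope ring_scope.

Section Aux.
Variable K : comNzRingType.
Implicit Types p q : {poly K}.

Lemma sz_add p q n : (size p <= n)%N -> (size q <= n)%N -> (size (p + q)%R <= n)%N.
Proof. by move=> hp hq; apply: leq_trans (size_polyD _ _) _; rewrite geq_max hp hq. Qed.

Lemma sz_cX (c : K) n : (size (c%:P * 'X^n)%R <= n.+1)%N.
Proof. by rewrite mul_polyC; apply: leq_trans (size_scale_leq _ _) _; rewrite size_polyXn. Qed.

Lemma sz_cXp (c : K) n p s : (size p <= s)%N -> (size (c%:P * 'X^n * p)%R <= n + s)%N.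
Proof.
move=> hp; apply: leq_trans (size_polyMleq _ _) _.
have := sz_cX c n; case: (size (c%:P * 'X^n)%R) => [|k] hk.
  by rewrite add0n; apply: leq_trans (leq_pred _) _; lia.
rewrite addSn /=; exact: leq_add.
Qed.

Lemma sz_mul p q a b : (size p <= a)%N -> (size q <= b.+1)%N -> (size (p * q)%R <= a + b)%N.
Proof.
move=> hp hq; apply: leq_trans (size_polyMleq _ _) _.
move: (size p) (size q) hp hq => sp sq hp hq.
case: sp hp => [|k] hk.
  rewrite add0n; case: sq hq => [|j] hj /=; lia.
rewrite addSn /=; lia.
Qed.

Lemma pow_form (a b : K) (d m : nat) (R : {poly K}) :
  (m <= d)%N -> (1 <= m)%N -> (size R <= d - m)%N ->
  forall k, exists Rk : {poly K}, (size Rk <= k.+1 * d - m)%N /\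
   (a%:P * 'X^d + b%:P * 'X^(d - m) + R) ^+ k.+1 =
     (a ^+ k.+1)%:P * 'X^(k.+1 * d) + (a ^+ k * b *+ k.+1)%:P * 'X^(k.+1 * d - m) + Rk.
Proof.
move=> hmd hm hR.
set Q := (a%:P * 'X^d + b%:P * 'X^(d - m) + R).
have hQ : (size Q <= d.+1)%N.
  apply: sz_add; first (apply: sz_add; [exact: sz_cX|]).
  - by apply: leq_trans (sz_cX _ _) _; lia.
  - by lia.
elim=> [|k [Rk [hRk IH]]].
  exists R; split; first by rewrite mul1n.
  by rewrite expr1 expr0 mul1r mul1n mulr1n.
set N := (k.+1 * d)%N.
set A := (a ^+ k.+1)%:P * 'X^N.
set B := (a ^+ k * b *+ k.+1)%:P * 'X^(N - m).
exists (A * R + B * (b%:P * 'X^(d - m)) + B * R + Rk * Q); split.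
  have e : (k.+2 * d - m = N + (d - m))%N by rewrite /N; lia.
  rewrite e; repeat apply: sz_add.
  - exact: sz_cXp.
  - rewrite /B; apply: leq_trans (@sz_cXp (a ^+ k * b *+ k.+1) (N - m)%N _ _ (sz_cX b (d - m))) _; lia.
  - rewrite /B; apply: leq_trans (@sz_cXp (a ^+ k * b *+ k.+1) (N - m)%N _ _ hR) _; lia.
  - apply: leq_trans (@sz_mul Rk Q (N - m)%N d hRk hQ) _; lia.
have e1 : 'X^N = 'X^(N - m) * 'X^m :> {poly K} by rewrite -exprD; congr (_ ^+ _); rewrite /N; nia.
have e2 : 'X^d = 'X^m * 'X^(d - m) :> {poly K} by rewrite -exprD; congr (_ ^+ _); lia.
have e3 : 'X^(k.+2 * d) = 'X^(N - m) * 'X^m * ('X^m * 'X^(d - m)) :> {poly K}.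
  by rewrite -!exprD; congr (_ ^+ _); rewrite /N; nia.
have e4 : 'X^(k.+2 * d - m) = 'X^(N - m) * ('X^m * 'X^(d - m)) :> {poly K}.
  by rewrite -!exprD; congr (_ ^+ _); rewrite /N; nia.
rewrite exprSr IH /Q /A /B e3 e4 e1 e2.
move: ('X^(N - m)) ('X^m) ('X^(d - m)) => Y Xm Z.
rewrite !exprS !(rmorphMn, rmorphM) /=.
move: ((a ^+ k)%:P) (a%:P) (b%:P) => ak aP bP.
ring.
Qed.

Lemma good_form (Q : {poly K}) (d m : nat) :
  (1 <= m)%N -> (m <= d)%N -> size Q = d.+1 ->
  (forall i : nat, (d - m < i < d)%N -> Q`_i = 0) ->
  exists R : {poly K}, (size R <= d - m)%N /\
    Q = (Q`_d)%:P * 'X^d + (Q`_(d - m))%:P * 'X^(d - m) + R.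
Proof.
move=> hm hmd hs hz.
exists (Q - ((Q`_d)%:P * 'X^d + (Q`_(d - m))%:P * 'X^(d - m))); split; last first.
  by rewrite addrC subrK.
apply/leq_sizeP => j hj.
rewrite coefB coefD !coefCM !coefXn !mulr_natr !mulrb.
have hne : (d == d - m)%N = false by apply/eqP; lia.
have [->|jd] := eqVneq j d; first by rewrite ?eqxx hne addr0 subrr.
have [->|jdm] := eqVneq j (d - m)%N.
  by rewrite add0r subrr.
rewrite ?(negbTE jd) ?(negbTE jdm) ?addr0 ?subr0.
case: (ltngtP j d) => hjd.
- by apply: hz; apply/andP; split => //; move: jdm => /eqP; lia.
- by apply: nth_default; rewrite hs.
- by move: jd; rewrite hjd eqxx.
Qed.

Lemma form_good (c1 c2 : K) (N m : nat) (E : {poly K}) :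
  (1 <= m)%N -> (m <= N)%N -> (size E <= N - m)%N -> c1 != 0 ->
  let T := c1%:P * 'X^N + c2%:P * 'X^(N - m) + E in
  [/\ size T = N.+1, T`_N = c1, T`_(N - m) = c2 &
      forall i : nat, (N - m < i < N)%N -> T`_i = 0].
Proof.
move=> hm hmN hE hc1 T.
have coefT j : (N - m <= j)%N -> T`_j = (if j == N then c1 else 0) + (if j == (N - m)%N then c2 else 0).
  move=> hj; rewrite /T !coefD !coefCM !coefXn (nth_default _ (leq_trans hE hj)).
  by rewrite addr0 !mulr_natr !mulrb.
have hne : (N == N - m)%N = false by apply/eqP; lia.
have cN : T`_N = c1.
  by rewrite coefT ?leq_subr // eqxx hne addr0.
split => //.
- apply/eqP; rewrite eqn_leq; apply/andP; split.
    apply/leq_sizeP => j hj; rewrite coefT; last by lia.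
    have -> : (j == N)%N = false by apply/eqP; lia.
    have -> : (j == N - m)%N = false by apply/eqP; lia.
    by rewrite addr0.
  rewrite ltnNge; apply/negP => h; move: hc1; rewrite -cN (nth_default _ h).
  by rewrite eqxx.
- by rewrite coefT // eq_sym hne eqxx add0r.
- move=> i /andP [h1 h2]; rewrite coefT; last by lia.
  have -> : (i == N)%N = false by apply/eqP; lia.
  have -> : (i == N - m)%N = false by apply/eqP; lia.
  by rewrite addr0.
Qed.
End Aux.

Section Main.
Variable R : realType.

Definition good (m : nat) (Q : {poly R[i]}) (d : nat) :=
  [/\ size Q = d.+1, Q`_d * Q`_(d - m) != 0 &
      forall i : nat, (d - m < i < d)%N -> Q`_i = 0].

Lemma step (D m d : nat) (P Q : {poly R[i]}) :
  (2 <= D)%N -> (2 <= m)%N -> (m <= D)%N -> (2 <= d)%N -> (m <= d)%N ->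
  good m P D -> good m Q d -> good m (P \Po Q) (D * d).
Proof.
move=> hD hm hmD hd hmd [hPs hPc hPz] [hQs hQc hQz].
have [Rr [hR eQ]] := @good_form _ Q d m (ltnW hm) hmd hQs hQz.
set a := Q`_d in eQ hQc; set b := Q`_(d - m) in eQ hQc.
have /andP[ha hb] : (a != 0) && (b != 0) by move: hQc; rewrite mulf_eq0 negb_or.
have /andP[hPD _] : (P`_D != 0) && (P`_(D - m) != 0) by move: hPc; rewrite mulf_eq0 negb_or.
have [Rk [hRk ePow]] := @pow_form _ a b d m Rr hmd (ltnW hm) hR D.-1.
have hD1 : D.-1.+1 = D by lia.
rewrite hD1 -eQ in ePow hRk.
rewrite comp_polyE hPs big_ord_recr /=.
set E := \sum_(i < D) _.
have hE : (size E <= D * d - m)%N.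
  rewrite /E; apply: (big_ind (fun p : {poly R[i]} => size p <= D * d - m)%N).
  - by rewrite size_poly0.
  - by move=> p q hp hq; apply: sz_add.
  move=> i _; case: (eqVneq P`_i 0) => [->|hi]; first by rewrite scale0r size_poly0.
  have hiD : (i <= D - m)%N.
    rewrite leqNgt; apply/negP => h; move: hi; rewrite hPz ?eqxx //.
    by apply/andP; split => //; apply: ltn_ord.
  apply: leq_trans (size_scale_leq _ _) _.
  apply: leq_trans (size_poly_exp_leq _ _) _.
  rewrite hQs /=.
  move: (nat_of_ord i) hiD => i' hiD; nia.
rewrite ePow.
have -> : E + P`_D *: ((a ^+ D)%:P * 'X^(D * d) + (a ^+ D.-1 * b *+ D)%:P * 'X^(D * d - m) + Rk)
   = (P`_D * a ^+ D)%:P * 'X^(D * d) + (P`_D * (a ^+ D.-1 * b *+ D))%:P * 'X^(D * d - m)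
     + (E + (P`_D)%:P * Rk).
  rewrite -mul_polyC !rmorphM /=.
  move: ((P`_D)%:P) ((a ^+ D)%:P) ((a ^+ D.-1 * b *+ D)%:P) => p1 p2 p3.
  ring.
have hE' : (size (E + (P`_D)%:P * Rk)%R <= D * d - m)%N.
  apply: sz_add => //; rewrite mul_polyC; exact: leq_trans (size_scale_leq _ _) hRk.
have hc1 : P`_D * a ^+ D != 0 by rewrite mulf_neq0 // expf_neq0.
have hm1 : (1 <= m)%N by lia.
have hmN : (m <= D * d)%N by nia.
have [h1 h2 h3 h4] := @form_good _ _ (P`_D * (a ^+ D.-1 * b *+ D)) (D * d)%N m _ hm1 hmN hE' hc1.
split => //; rewrite h2 h3 mulf_neq0 // mulf_neq0 // mulrn_eq0 negb_or.
by rewrite mulf_neq0 ?expf_neq0 // andbT; apply/eqP; lia.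
Qed.

End Main.

Theorem lemma7p2 (R : realType) (D m : nat) (P : {poly R[i]}) :
  (2 <= D)%N -> (2 <= m)%N -> (m <= D)%N ->
  size P = D.+1 ->
  P`_D * P`_(D - m) != 0 ->
  (forall i : nat, (D - m < i < D)%N -> P`_i = 0) ->
  forall n : nat, (0 < n)%N ->
    let Q := poly_iter P n in
    [/\ size Q = (D ^ n).+1,
        Q`_(D ^ n) * Q`_(D ^ n - m) != 0 &
        forall i : nat, (D ^ n - m < i < D ^ n)%N -> Q`_i = 0].
Proof.
move=> hD hm hmD hs hc hz.
have hP : @good R m P D by [].
elim=> [//|n IH] _.
case: n IH => [|n] IH.
  by rewrite /poly_iter /= comp_polyXr expn1.
have IH' := IH isT.
change (@good R m (P \Po poly_iter P n.+1) (D ^ n.+2)).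
have hDd : (D <= D ^ n.+1)%N by rewrite expnS leq_pmulr // expn_gt0; lia.
rewrite expnS; apply: step => //; lia.
Qed.
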